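(* Let $i\in\{1,\dots,N\}$, $k\ne y_i$, and $\delta>0$. If $u_i\le\log(1+e^{x_i^\top(w_k-w_{y_i})})-\delta$, then replacing $u_i$ by $\log(1+e^{x_i^\top(w_k-w_{y_i})})$ (keeping all other coordinates of $u$ and $W$ fixed) decreases $f(u,W)$ by at least $\delta^2/2$.
   Context: Data: $(y_i,x_i)$, $i=1,\dots,N$, $x_i\in\mathbb{R}^D$, $y_i\in\{1,\dots,K\}$, $K\ge 2$; $\mu\ge0$; $u\in\mathbb{R}^N$, $W=[w_1,\dots,w_K]\in\mathbb{R}^{D\times K}$ with Frobenius norm $\|W\|_2$; $$f(u,W)=\sum_{i=1}^N\Big[u_i+e^{-u_i}+\sum_{k\ne y_i}e^{x_i^\top(w_k-w_{y_i})-u_i}\Big]+\tfrac{\mu}{2}\|W\|_2^2.$$ *)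

(* Defs.v *)
From mathcomp Require Import all_boot all_order all_algebra.
From mathcomp Require Import all_classical all_reals all_analysis.
Set Implicit Arguments. Unset Strict Implicit. Unset Printing Implicit Defensive.
Import Order.TTheory GRing.Theory Num.Theory.
Local Open Scope ring_scope.

(* margin x_i^T (w_k - w_{y_i}); x i is a row vector in R^D, W is D x K,
   w_k is the k-th column of W *)
Definition margin (R : realType) (N D K : nat)
  (x : 'I_N -> 'rV[R]_D) (y : 'I_N -> 'I_K) (W : 'M[R]_(D, K))
  (i : 'I_N) (k : 'I_K) : R :=
  \sum_(d < D) x i 0 d * (W d k - W d (y i)).

Definition frob2 (R : realType) (D K : nat) (W : 'M[R]_(D, K)) : R :=
  \sum_(d < D) \sum_(k < K) W d k ^+ 2.

Definition fobj (R : realType) (N D K : nat)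
  (x : 'I_N -> 'rV[R]_D) (y : 'I_N -> 'I_K) (mu : R)
  (u : 'I_N -> R) (W : 'M[R]_(D, K)) : R :=
  \sum_(i < N) (u i + expR (- u i)
       + \sum_(k < K | k != y i) expR (margin x y W i k - u i))
  + mu / 2 * frob2 W.

(* Main.v *)
Require Import Defs.
From mathcomp Require Import all_boot all_order all_algebra.
From mathcomp Require Import all_classical all_reals all_analysis.
From mathcomp Require Import ring lra.
Import Order.TTheory GRing.Theory Num.Theory.
Local Open Scope ring_scope.

Lemma exp_quad (R : realType) (t : R) : 0 <= t -> 1 + t + t ^+ 2 / 2 <= expR t.
Proof.
move=> t0.
have := @nondecreasing_cvgn_le R (series (exp_coeff t)) _ (is_cvg_series_exp_coeff t) 3.
have -> : series (exp_coeff t) 3 = 1 + t + t ^+ 2 / 2.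
  rewrite /series /= !big_nat_recr //= big_nil /exp_coeff /=.
  rewrite expr0 expr1 !divr1 add0r. done.
apply.
rewrite /series /=; apply: nondecreasing_series => n _ _; exact: exp_coeff_ge0.
Qed.

Lemma key (R : realType) (u L A delta : R) : 0 < delta -> u <= L - delta ->
  expR L <= A -> delta ^+ 2 / 2 <= (u + A * expR (- u)) - (L + A * expR (- L)).
Proof.
move=> d0 hu hA.
set t := L - u.
have ht : delta <= t by rewrite /t; lra.
have -> : u = L - t by rewrite /t; lra.
have -> : expR (- (L - t)) = expR t * expR (- L) by rewrite -expRD; congr expR; lra.
have hc : 1 <= A * expR (- L).
  rewrite -(expRxMexpNx_1 L); apply: ler_wpM2r => //; exact: expR_ge0.
have hE := @exp_quad R t (le_trans (ltW d0) ht).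
move: hc hE; set c := A * expR (- L); set E := expR t => hc hE.
have -> : A * (E * expR (- L)) = c * E by rewrite /c; ring.
nra.
Qed.

Theorem lemma5 (R : realType) (N D K : nat)
  (x : 'I_N -> 'rV[R]_D) (y : 'I_N -> 'I_K) (mu : R)
  (u : 'I_N -> R) (W : 'M[R]_(D, K))
  (i : 'I_N) (k : 'I_K) (delta : R) :
  (2 <= K)%N -> 0 <= mu -> k != y i -> 0 < delta ->
  u i <= ln (1 + expR (margin x y W i k)) - delta ->
  fobj x y mu u W
    - fobj x y mu
        (fun j => if j == i then ln (1 + expR (margin x y W i k)) else u j) W
    >= delta ^+ 2 / 2.
Proof.
move=> _ _ hk d0 hu.
set L := ln (1 + expR (margin x y W i k)).
set S := \sum_(k0 < K | k0 != y i) expR (margin x y W i k0).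
have gE : forall w : R, w + expR (- w) + \sum_(k0 < K | k0 != y i) expR (margin x y W i k0 - w)
    = w + (1 + S) * expR (- w).
  move=> w; rewrite /S mulrDl mul1r big_distrl /=.
  under eq_bigr do rewrite expRD.
  by rewrite addrA.
rewrite /fobj (bigD1 i) //= [X in _ - (X + _)](bigD1 i) //= eqxx.
rewrite [X in _ - (_ + X + _)](eq_bigr (fun j => u j + expR (- u j) + \sum_(k0 < K | k0 != y j) expR (margin x y W j k0 - u j))); last first.
  by move=> j /negPf ->.
rewrite !gE. have hA : expR L <= 1 + S.
  rewrite /L lnK; last by rewrite posrE; apply: addr_gt0 => //; exact: expR_gt0.
  rewrite lerD2l /S (bigD1 k) //= lerDl; apply: sumr_ge0 => j _; exact: expR_ge0.
have := @key R _ _ _ _ d0 hu hA.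
move=> h; apply: (le_trans h); rewrite le_eqVlt; apply/orP; left; apply/eqP.
set T := \sum_(j < N | j != i) _. set M := mu / 2 * frob2 W.
rewrite -/L; clearbody T M L S; ring.
Qed.
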